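(* Let $p$ be a prime, let $d,n$ be natural numbers, and let $A\subseteq\{0,1\}^n\subseteq\mathbb{F}_p^n$ satisfy $|A|>p\cdot|\mathcal{M}_{\lfloor d/p\rfloor}(p,n)|$. Then $\mathsf{int\text{-}deg}_p(p\cdot A)>d$.
   Context: For $A\subseteq\mathbb{F}_p^n$ and a positive integer $k$, $k\cdot A=\{a_1+\dots+a_k \mid a_i\in A\}$ is the $k$-fold sumset (addition in $\mathbb{F}_p^n$). A polynomial in $\mathbb{F}_p[x_1,\dots,x_n]$ is $p$-reduced if each variable appears with individual degree at most $p-1$; every function $\mathbb{F}_p^n\to\mathbb{F}_p$ is represented by a unique $p$-reduced polynomial. For $B\subseteq\mathbb{F}_p^n$, $\mathsf{int\text{-}deg}_p(B)$ is the minimum $d$ such that every function $f:B\to\mathbb{F}_p$ agrees on $B$ with some $p$-reduced polynomial of total degree at most $d$. $\mathcal{M}_k(p,n)$ denotes the set of monomials in $x_1,\dots,x_n$ in which each variable has degree at most $p-1$ and the total degree is at most $k$. *)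

(* Defs.v *)
From HB Require Import structures.
From mathcomp Require Import all_boot all_order all_algebra.
Set Implicit Arguments. Unset Strict Implicit. Unset Printing Implicit Defensive.
Import GRing.Theory.
Local Open Scope ring_scope.

(* Exponent vectors of p-reduced monomials: each exponent < p. *)
Definition expvec (p n : nat) := {ffun 'I_n -> 'I_p}.

Definition monos (p n k : nat) : {set expvec p n} :=
  [set m : expvec p n | (\sum_(i < n) (m i : nat) <= k)%N].

Definition mono_eval (p n : nat) (m : expvec p n) (x : 'rV['F_p]_n) : 'F_p :=
  \prod_(i < n) x ord0 i ^+ m i.

Definition poly_eval (p n d : nat) (c : {ffun expvec p n -> 'F_p})
  (x : 'rV['F_p]_n) : 'F_p :=
  \sum_(m in monos p n d) c m * mono_eval m x.

Definition interp_deg (p n : nat) (B : {set 'rV['F_p]_n}) (d : nat) : bool :=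
  [forall f : {ffun 'rV['F_p]_n -> 'F_p},
     [exists c : {ffun expvec p n -> 'F_p},
        [forall x in B, f x == poly_eval d c x]]].

(* int-deg_p(B): the least d with interp_deg. Such d always exists and is
   at most n*(p-1) (all p-reduced monomials have degree <= n*(p-1)), so
   searching d in [0, n*(p-1)] finds the minimum. *)
Definition int_deg (p n : nat) (B : {set 'rV['F_p]_n}) : nat :=
  find (interp_deg B) (iota 0 (n * (p - 1)).+1).

Definition sumset (p n k : nat) (A : {set 'rV['F_p]_n}) : {set 'rV['F_p]_n} :=
  [set x | [exists a : {ffun 'I_k -> 'rV['F_p]_n},
              [forall i, a i \in A] && (x == \sum_(i < k) a i)]].

Definition boolean_set (p n : nat) (A : {set 'rV['F_p]_n}) : Prop :=
  forall a, a \in A -> forall i, (a ord0 i == 0) || (a ord0 i == 1).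

(* Main.v *)
From HB Require Import structures.
Require Import Defs.
From mathcomp Require Import all_boot all_order all_algebra all_field.
From mathcomp Require Import zify ring lra.
From Stdlib Require Import Classical.
Set Implicit Arguments. Unset Strict Implicit. Unset Printing Implicit Defensive.
Import GRing.Theory.
Local Open Scope ring_scope.


Section LA.
Variable F : fieldType.
Variable N : nat.

Definition sel (S : {set 'I_N}) : 'M[F]_(#|S|, N) :=
  \matrix_(k, j) (j == enum_val k)%:R.

Definition supp (v : 'rV[F]_N) : {set 'I_N} := [set i | v 0 i != 0].

Lemma selTE m (M : 'M[F]_(m, N)) S a k :
  (M *m (sel S)^T) a k = M a (enum_val k).
Proof.
rewrite !mxE (bigD1 (enum_val k)) //= !mxE eqxx mulr1 big1 ?addr0 //.
by move=> j /negbTE hj; rewrite !mxE hj mulr0.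
Qed.

Lemma selP m (M : 'M[F]_(m, N)) S :
  (M *m (sel S)^T == 0) = [forall a, forall i in S, M a i == 0].
Proof.
apply/eqP/forallP => [H a|H]; last first.
  apply/matrixP => a k; rewrite selTE mxE.
  by apply/eqP; have /forall_inP := H a; apply; apply: enum_valP.
apply/forall_inP => i iS.
have := congr1 (fun M : 'M[F]_(m, #|S|) => M a (enum_rank_in iS i)) H.
by rewrite selTE enum_rankK_in // mxE => ->.
Qed.

Lemma rank_sel S : \rank (sel S) = #|S|.
Proof.
apply/eqP; rewrite eqn_leq rank_leq_row /=.
have E : sel S *m (sel S)^T = 1%:M.
  apply/matrixP => a k; rewrite selTE !mxE.
  by rewrite (inj_eq enum_val_inj) eq_sym.
by rewrite -{1}(mxrank1 F #|S|) -E mxrankM_maxl.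
Qed.

Lemma rank_ker_sel S : \rank (kermx (sel S)^T) = (N - #|S|)%N.
Proof. by rewrite mxrank_ker mxrank_tr rank_sel. Qed.

Lemma L1 m (K : 'M[F]_(m, N)) k : (k <= \rank K)%N ->
  exists2 h : 'rV_N, (h <= K)%MS & (k <= #|supp h|)%N.
Proof.
elim: k => [|k IH] hk.
  by exists 0; rewrite ?sub0mx.
have [h hK hs] := IH (ltnW hk).
case: (ltnP k #|supp h|) => hs2; first by exists h.
have eqs : #|supp h| = k by apply/eqP; rewrite eqn_leq hs2 hs.
set X := kermx (sel (supp h))^T.
have rX := rank_ker_sel (supp h).
have := mxrank_sum_cap K X.
have := rank_leq_col (K + X)%MS.
move=> h1 h2.
have hpos : (0 < \rank (K :&: X)%MS)%N.
  rewrite rX in h2.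
  have := rank_leq_col K.
  lia.
have : (K :&: X)%MS != 0 by rewrite -mxrank_eq0 -lt0n.
case/matrix0Pn => a [i hai].
set g := row a (K :&: X)%MS.
have gKX : (g <= K :&: X)%MS by rewrite row_sub.
have gK : (g <= K)%MS by apply: submx_trans gKX (capmxSl _ _).
have gX : (g <= X)%MS by apply: submx_trans gKX (capmxSr _ _).
have gS : forall j, j \in supp h -> g 0 j = 0.
  move: gX; rewrite sub_kermx selP => /forallP /(_ 0) /forall_inP H j hj.
  by apply/eqP; apply: H.
exists (h + g); first by rewrite addmx_sub.
rewrite -eqs; apply: proper_card; rewrite properE; apply/andP; split.
  apply/subsetP => j; rewrite !inE mxE => hj.
  by rewrite gS ?addr0 // inE.
have hgi : g 0 i != 0 by rewrite /g mxE.
have hi : i \notin supp h by apply/negP => /gS; apply/eqP.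
apply/subsetPn; exists i; last by [].
rewrite inE mxE; move: hi; rewrite inE negbK => /eqP ->.
by rewrite add0r.
Qed.

Lemma L2 m (K : 'M[F]_(m, N)) (w : 'rV[F]_N) :
  (forall g1 g2 : 'rV_N, (g1 <= K)%MS -> (g2 <= K)%MS ->
     \sum_i g1 0 i * g2 0 i * w 0 i = 0) ->
  (#|supp w| + \rank K <= (N - \rank K) + N)%N.
Proof.
move=> H.
set Dw := diag_mx w.
have KDK : K *m Dw *m K^T = 0.
  apply/matrixP => a b; rewrite !mxE.
  rewrite -[RHS](H (row a K) (row b K)) ?row_sub //.
  apply: eq_bigr => i _; rewrite mul_mx_diag !mxE; ring.
have r1 : (\rank (K *m Dw) <= N - \rank K)%N.
  have : (K *m Dw <= kermx K^T)%MS by rewrite sub_kermx KDK.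
  by move/mxrankS; rewrite mxrank_ker mxrank_tr.
have r2 : (\rank (K :&: kermx Dw)%MS <= N - #|supp w|)%N.
  rewrite -(rank_ker_sel (supp w)); apply: mxrankS.
  apply: submx_trans (capmxSr _ _) _.
  rewrite sub_kermx selP; apply/forallP => a; apply/forall_inP => i.
  rewrite inE => hw.
  have := congr1 (fun M : 'M[F]_(N, N) => M a i) (mulmx_ker Dw).
  rewrite mul_mx_diag !mxE => /eqP; rewrite mulf_eq0 (negbTE hw) orbF.
  by [].
have := mxrank_mul_ker K Dw.
have := rank_leq_col K.
have : (#|supp w| <= N)%N by apply: (leq_trans (max_card _)); rewrite card_ord.
lia.
Qed.

Lemma LAmain c (Phi : 'M[F]_(c, N)) k :
  (if k == 0%N then 2 * c < N else 3 * c < N)%N ->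
  exists g1 g2 h : 'rV[F]_N,
    [/\ g1 *m Phi^T = 0, g2 *m Phi^T = 0, h *m Phi^T = 0 &
       \sum_i g1 0 i * g2 0 i * h 0 i ^+ k != 0].
Proof.
move=> hc.
set K := kermx Phi^T.
have rK : \rank K = (N - \rank Phi)%N by rewrite mxrank_ker mxrank_tr.
have rPhi := rank_leq_row Phi.
have [h hK hs] := L1 (leqnn (\rank K)).
set w := \row_i h 0 i ^+ k.
have memK g : (g <= K)%MS -> g *m Phi^T = 0 by rewrite sub_kermx => /eqP.
apply: NNPP => Hn.
have Hs : forall g1 g2 : 'rV_N, (g1 <= K)%MS -> (g2 <= K)%MS ->
     \sum_i g1 0 i * g2 0 i * w 0 i = 0.
  move=> g1 g2 h1 h2; apply: NNPP => hne; apply: Hn.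
  exists g1, g2, h; split; try by apply: memK.
  apply/eqP => e; apply: hne; rewrite -[RHS]e; apply: eq_bigr => i _; by rewrite mxE.
have := L2 Hs.
have := rank_leq_col K.
have [hk0|hk] := eqVneq k 0%N.
  rewrite hk0 /= in hc.
  have -> : supp w = setT.
    by apply/setP => i; rewrite !inE mxE hk0 expr0 oner_eq0.
  rewrite cardsT card_ord; lia.
rewrite (negbTE hk) in hc.
have -> : supp w = supp h.
  apply/setP => i; rewrite !inE mxE expf_eq0.
  by rewrite lt0n hk.
lia.
Qed.

End LA.


Lemma sum_lt (p k : nat) : (\sum_(l < p) ((l : nat) < k)%N)%N = minn k p.
Proof.
elim: p => [|p IH]; first by rewrite big_ord0 minn0.
rewrite big_ord_recr /= IH; lia.
Qed.

Lemma prod_if (R : comPzRingType) (I : finType) (P : pred I) (y : R) :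
  \prod_(l : I) (if P l then y else 1) = y ^+ (\sum_l (P l : nat)).
Proof.
rewrite -prodrXr; apply: eq_bigr => l _; by case: (P l); rewrite ?expr1 ?expr0.
Qed.

Lemma sum_eq_pick (I : finType) (s : I) (b : bool) :
  (\sum_(j : I) ((s == j) && b : nat))%N = b.
Proof.
rewrite (bigD1 s) //= eqxx /= big1 ?addn0 // => j hj.
by rewrite eq_sym (negbTE hj).
Qed.

Section Expand.
Variables (p n : nat) (p0 : (0 < p)%N).
Local Notation T := 'rV['F_p]_n.

Lemma expand_mono D (m : expvec p n) (hm : (\sum_i (m i : nat) <= D)%N)
  (h : 'I_p -> T -> 'F_p) :
  (forall j mu, mu \in monos p n (D %/ p) -> \sum_x h j x * mono_eval mu x = 0) ->
  \sum_(a : {ffun 'I_p -> T}) (\prod_j h j (a j)) * mono_eval m (\sum_j a j) = 0.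
Proof.
move=> Hh.
pose j0 := Ordinal p0.
pose act (q : 'I_n * 'I_p) := (q.2 < m q.1)%N.
pose Fq (q : 'I_n * 'I_p) (j : 'I_p) (x : T) : 'F_p :=
  if act q then x 0 q.1 else (j == j0)%:R.
have step1 : forall y : T, mono_eval m y = \prod_q (if act q then y 0 q.1 else 1).
  move=> y; rewrite /mono_eval.
  rewrite (eq_bigr (fun i => \prod_(l : 'I_p) (if act (i, l) then y 0 i else 1))).
    by rewrite pair_bigA; apply: eq_bigr => [[i l]] _.
  move=> i _; rewrite (prod_if (fun l : 'I_p => act (i, l))) /act /= sum_lt.
  by rewrite (minn_idPl (ltnW (ltn_ord (m i)))).
have step2 : forall a : {ffun 'I_p -> T}, mono_eval m (\sum_j a j) =
    \sum_(s : {ffun 'I_n * 'I_p -> 'I_p}) \prod_q Fq q (s q) (a (s q)).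
  move=> a; rewrite step1 -(bigA_distr_bigA (fun q j => Fq q j (a j))) /=; apply: eq_bigr => q _.
  rewrite /Fq; case: (act q).
    by rewrite summxE.
  by rewrite (bigD1 j0) //= big1 ?addr0 // => j /negbTE ->.
under eq_bigr do rewrite step2 mulr_sumr.
rewrite exchange_big /=; apply: big1 => s _.
pose G j x := h j x * \prod_(q | s q == j) Fq q j x.
have HG : forall a : {ffun 'I_p -> T},
    (\prod_j h j (a j)) * \prod_q Fq q (s q) (a (s q)) = \prod_j G j (a j).
  move=> a; rewrite (partition_big s predT) //= -big_split /=.
  apply: eq_bigr => j _; congr (_ * _).
  by apply: eq_bigr => q /= /eqP ->.
under eq_bigr do rewrite HG.
rewrite -bigA_distr_bigA /=.
pose e_nat j i := (\sum_(l < p) ((s (i, l) == j) && act (i, l)))%N.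
have hsum : (\sum_j \sum_i e_nat j i = \sum_i (m i : nat))%N.
  rewrite exchange_big /=; apply: eq_bigr => i _.
  rewrite /e_nat exchange_big /=.
  under eq_bigr do rewrite sum_eq_pick.
  rewrite /act /= sum_lt; apply/minn_idPl/ltnW/ltn_ord.
have [j hj] : exists j, (\sum_i e_nat j i <= D %/ p)%N.
  apply: NNPP => hn.
  have hall : forall j, (D %/ p < \sum_i e_nat j i)%N.
    by move=> j; rewrite ltnNge; apply/negP => hle; apply: hn; exists j.
  have : (\sum_(j < p) (D %/ p).+1 <= \sum_j \sum_i e_nat j i)%N.
    by apply: leq_sum => j _; apply: hall.
  rewrite sum_nat_const card_ord hsum.
  have := ltn_ceil D p0; rewrite mulnC.
  move: (p * (D %/ p).+1)%N => t; lia.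
rewrite (bigD1 j) //=; apply/eqP; rewrite mulf_eq0; apply/orP; left; apply/eqP.
have he : forall i, (e_nat j i < p)%N.
  move=> i; apply: (leq_ltn_trans _ (ltn_ord (m i))).
  rewrite -[X in (_ <= X)%N](minn_idPl (ltnW (ltn_ord (m i)))) -sum_lt.
  by apply: leq_sum => l _; rewrite /act /=; case: (s (i, l) == j).
pose e : expvec p n := [ffun i => Ordinal (he i)].
have emon : e \in monos p n (D %/ p).
  by rewrite inE; under eq_bigr do rewrite ffunE /=; exact: hj.
pose C := \prod_(q | (s q == j) && ~~ act q) ((j == j0)%:R : 'F_p).
have hG : forall x, G j x = h j x * mono_eval e x * C.
  move=> x; rewrite /G -mulrA; congr (_ * _).
  rewrite (bigID act) /=; congr (_ * _).
    rewrite (eq_bigr (fun q => x 0 q.1)); last first.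
      by move=> q /andP [_ hq]; rewrite /Fq hq.
    rewrite big_mkcond /= /mono_eval.
    rewrite (eq_bigr (fun i => \prod_(l : 'I_p) (if (s (i, l) == j) && act (i, l) then x 0 i else 1))); last first.
      by move=> i _; rewrite (prod_if (fun l : 'I_p => (s (i, l) == j) && act (i, l))) ffunE.
    rewrite pair_bigA /=; apply: eq_bigr => [[i l]] _ //.
  by apply: eq_bigr => q /andP [_ hq]; rewrite /Fq (negbTE hq).
by rewrite (eq_bigr _ (fun x _ => hG x)) -mulr_suml Hh // mul0r.
Qed.

End Expand.

Lemma expand (p n D : nat) (p0 : (0 < p)%N) (c : {ffun expvec p n -> 'F_p})
  (h : 'I_p -> 'rV['F_p]_n -> 'F_p) :
  (forall j mu, mu \in monos p n (D %/ p) -> \sum_x h j x * mono_eval mu x = 0) ->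
  \sum_(a : {ffun 'I_p -> 'rV['F_p]_n}) (\prod_j h j (a j)) * poly_eval D c (\sum_j a j) = 0.
Proof.
move=> Hh; rewrite /poly_eval.
under eq_bigr do rewrite mulr_sumr.
rewrite exchange_big /=; apply: big1 => m hm.
under eq_bigr do rewrite mulrCA.
rewrite -mulr_sumr (@expand_mono p n p0 D m) ?mulr0 //.
by rewrite inE in hm.
Qed.

Lemma boolsum (k n : nat) (pr : prime k.+2) (a : {ffun 'I_k.+2 -> 'rV['F_(k.+2)]_n}) :
  (forall j i, (a j 0 i == 0) || (a j 0 i == 1)) ->
  (\sum_j a j == 0) = [forall j, a j == a ord0].
Proof.
move=> Hb.
apply/eqP/forallP => [H|H]; last first.
  rewrite (eq_bigr (fun _ => a ord0)); last by move=> j _; apply/eqP.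
  rewrite sumr_const card_ord; apply/rowP => i.
  by rewrite mulmxnE -mulr_natr (pchar_Fp_0 pr) mulr0 mxE.
have ebit : forall j i, a j 0 i = (nat_of_bool (a j 0 i == 1))%:R.
  move=> j i; case/orP: (Hb j i) => /eqP ->; last by rewrite eqxx.
  by rewrite eq_sym oner_eq0.
move=> j; apply/eqP/rowP => i.
pose b := fun l => a l 0 i == 1.
pose nb := fun l => a l 0 i != 1.
have hs : \sum_j (nat_of_bool (b j))%:R = 0 :> 'F_(k.+2).
  rewrite (eq_bigr (fun l => a l 0 i)); last by move=> l _; rewrite /b -(ebit l i).
  by rewrite -summxE H mxE.
rewrite -natr_sum in hs.
set S := (\sum_j (nat_of_bool (b j)))%N in hs.
have hdv : (k.+2 %| S)%N by rewrite (dvdn_pcharf (pchar_Fp pr)) hs.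
have hle : (S <= k.+2)%N.
  rewrite -[X in (_ <= X)%N](card_ord k.+2) -sum1_card.
  by apply: leq_sum => l _; apply: leq_b1.
have hsplit : (\sum_(l < k.+2) (nat_of_bool (nb l)) + S = k.+2)%N.
  rewrite /S -big_split /= -[RHS](card_ord k.+2) -sum1_card.
  by apply: eq_bigr => l _; rewrite /nb /b; case: (a l 0 i == 1).
have [S0|Spos] := posnP S.
  move/eqP: S0; rewrite sum_nat_eq0 => /forallP hz.
  have z : forall l, a l 0 i = 0.
    by move=> l; rewrite ebit; have := hz l; rewrite implyTb => /eqP ->.
  by rewrite !z.
have Sp : S = k.+2 by have := dvdn_leq Spos hdv; lia.
have : (\sum_(l < k.+2) (nat_of_bool (nb l)) == 0)%N by apply/eqP; lia.
rewrite sum_nat_eq0 => /forallP hz.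
have o : forall l, a l 0 i = 1.
  by move=> l; have := hz l; rewrite implyTb /nb; case: (a l 0 i =P 1).
by rewrite !o.
Qed.


Lemma sum_delta (R : pzSemiRingType) (T : finType) (a : T) (F : T -> R) :
  \sum_x (a == x)%:R * F x = F a.
Proof.
rewrite (bigD1 a) //= eqxx mul1r big1 ?addr0 // => x hx.
by rewrite eq_sym (negbTE hx) mul0r.
Qed.

Lemma allEq (R : comPzSemiRingType) (I T : finType) (i0 : I) (a : I -> T) :
  ([forall j, a j == a i0]%:R : R) = \sum_x \prod_j ((a j == x)%:R : R).
Proof.
have P x : \prod_j ((a j == x)%:R : R) = ([forall j, a j == x])%:R.
  case: (boolP [forall j, a j == x]) => H.
    by rewrite big1 ?H // => j _; rewrite (eqP (forallP H j)) eqxx.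
  move: H; rewrite negb_forall => /existsP [j hj].
  by rewrite (bigD1 j) //= (negbTE hj) mul0r.
rewrite (bigD1 (a i0)) //= P big1 ?addr0 // => x hx.
rewrite P; case: (boolP [forall j, a j == x]) => // H.
by rewrite (eqP (forallP H i0)) eqxx in hx.
Qed.

Lemma key (k n D : nat) (A : {set 'rV['F_(k.+2)]_n}) : prime k.+2 -> boolean_set A ->
  (exists c : {ffun expvec k.+2 n -> 'F_(k.+2)}, forall x, x \in sumset k.+2 A ->
      poly_eval D c x = (x == 0%R)%:R) ->
  (#|A| <= k.+2 * #|monos k.+2 n (D %/ k.+2)|)%N.
Proof.
move=> pr Hb [c Hc]; rewrite leqNgt; apply/negP => HN.
pose Phi : 'M['F_(k.+2)]_(#|monos k.+2 n (D %/ k.+2)|, #|A|) :=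
  \matrix_(r, i) mono_eval (enum_val r) (enum_val i).
have hk : (if k == 0%N then 2 * #|monos k.+2 n (D %/ k.+2)| < #|A|
           else 3 * #|monos k.+2 n (D %/ k.+2)| < #|A|)%N.
  case: eqP => [k0|kn0]; move: HN; rewrite ?k0; nia.
have [g1 [g2 [hv [e1 e2 e3 hne]]]] := LAmain Phi hk.
pose lift (v : 'rV['F_(k.+2)]_#|A|) (x : 'rV['F_(k.+2)]_n) :=
  \sum_(i < #|A|) (enum_val i == x)%:R * v 0 i.
have lift_val v i : lift v (enum_val i) = v 0 i.
  rewrite /lift (bigD1 i) //= eqxx mul1r big1 ?addr0 // => j hj.
  by rewrite (inj_eq enum_val_inj) (negbTE hj) mul0r.
have lift_out v x : x \notin A -> lift v x = 0.
  move=> hx; rewrite /lift big1 // => i _.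
  have : enum_val i \in A := enum_valP i.
  by case: eqP => [->|]; rewrite ?(negbTE hx) // mul0r.
have lift_orth v : v *m Phi^T = 0 -> forall mu, mu \in monos k.+2 n (D %/ k.+2) ->
    \sum_x lift v x * mono_eval mu x = 0.
  move=> ev mu hmu.
  rewrite (eq_bigr (fun x => \sum_i (enum_val i == x)%:R * (v 0 i * mono_eval mu x)));
    last by move=> x _; rewrite /lift mulr_suml; apply: eq_bigr => i _; rewrite mulrA.
  rewrite exchange_big /=.
  under eq_bigr do rewrite sum_delta.
  have := congr1 (fun M : 'M_(1, _) => M 0 (enum_rank_in hmu mu)) ev.
  rewrite !mxE => e; rewrite -[RHS]e; apply: eq_bigr => i _; rewrite /Phi !mxE enum_rankK_in //.
pose vec (j : 'I_k.+2) := if val j == 0%N then g1 else if val j == 1%N then g2 else hv.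
pose h j x := lift (vec j) x.
have vecK j : vec j *m Phi^T = 0 by rewrite /vec; case: ifP => _ //; case: ifP.
have E := @expand k.+2 n D (ltn0Sn _) c h (fun j mu hmu => lift_orth _ (vecK j) mu hmu).
have S1 : forall a : {ffun 'I_k.+2 -> 'rV_n},
    (\prod_j h j (a j)) * poly_eval D c (\sum_j a j) =
    \sum_x \prod_j (h j (a j) * (a j == x)%:R).
  move=> a; case: (boolP [forall j, a j \in A]) => HA.
    rewrite Hc; last by rewrite inE; apply/existsP; exists a; rewrite HA eqxx.
    rewrite boolsum //; last by move=> j i; apply: Hb; apply: (forallP HA j).
    under [RHS]eq_bigr do rewrite big_split /=.
    by rewrite -mulr_sumr (allEq _ ord0).
  move: HA; rewrite negb_forall => /existsP [j hj].
  rewrite (bigD1 j) //= {1}/h lift_out // !mul0r; symmetry; apply: big1 => x _.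
  by rewrite (bigD1 j) //= {1}/h lift_out // !mul0r.
rewrite (eq_bigr _ (fun a _ => S1 a)) exchange_big /= in E.
have S2 x : \sum_(a : {ffun 'I_k.+2 -> _}) \prod_j (h j (a j) * (a j == x)%:R) =
    \prod_j h j x.
  rewrite -(bigA_distr_bigA (fun j y => h j y * (y == x)%:R)) /=; apply: eq_bigr => j _.
  rewrite (eq_bigr (fun y => (x == y)%:R * h j y)) ?sum_delta // => y _.
  by rewrite mulrC eq_sym.
rewrite (eq_bigr _ (fun x _ => S2 x)) in E.
have S3 x : \prod_j h j x = lift g1 x * lift g2 x * lift hv x ^+ k.
  rewrite big_ord_recl big_ord_recl /= mulrA; congr (_ * _).
  rewrite (eq_bigr (fun _ => lift hv x)) ?prodr_const ?card_ord //.
rewrite (eq_bigr _ (fun x _ => S3 x)) in E.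
rewrite (bigID (fun x => x \notin A)) /= big1 ?add0r in E; last first.
  by move=> x hx; rewrite lift_out ?mul0r.
have E' : \sum_(x in A) lift g1 x * lift g2 x * lift hv x ^+ k = 0.
  by rewrite -[RHS]E; apply: eq_bigl => x; rewrite /= negbK.
rewrite big_enum_val /= in E'.
move/eqP: hne; apply; rewrite -[RHS]E'; apply: eq_bigr => i _.
by rewrite !lift_val.
Qed.


Lemma mono_monos (q n D D' : nat) : (D <= D')%N ->
  (#|monos q n (D %/ q)| <= #|monos q n (D' %/ q)|)%N.
Proof.
move=> hD; apply: subset_leq_card; apply/subsetP => m; rewrite !inE => hm.
by apply: (leq_trans hm); apply: leq_div2r.
Qed.

Lemma explicit (k n : nat) : prime k.+2 ->
  exists c : {ffun expvec k.+2 n -> 'F_(k.+2)},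
    forall x, poly_eval (n * (k.+2 - 1)) c x = (x == 0%R)%:R.
Proof.
move=> pr.
pose coef (e : 'I_k.+2) : 'F_(k.+2) := (ord0 == e)%:R - (ord_max == e)%:R.
exists [ffun m : expvec k.+2 n => \prod_(i < n) coef (m i)] => x.
rewrite /poly_eval (eq_bigl (fun _ : expvec k.+2 n => true)); last first.
  move=> m; rewrite inE /=.
  have hm : forall i, ((m : {ffun 'I_n -> 'I_k.+2}) i <= k.+1)%N by move=> i; rewrite -ltnS.
  apply: (@leq_trans (\sum_(i < n) k.+1)); first by apply: leq_sum => i _; apply: hm.
  by rewrite sum_nat_const card_ord; lia.
under eq_bigr do rewrite ffunE.
rewrite /mono_eval; under eq_bigr do rewrite -big_split /=.
rewrite -(bigA_distr_bigA (fun i (e : 'I_k.+2) => coef e * x 0 i ^+ e)) /=.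
have F1 (y : 'F_(k.+2)) : \sum_(e : 'I_k.+2) coef e * y ^+ e = (y == 0%R)%:R.
  rewrite /coef; under eq_bigr do rewrite mulrBl.
  rewrite sumrB !sum_delta /= expr0.
  case: (y =P 0) => [->|hy]; first by rewrite expr0n /= subr0.
  have e : y * y ^+ k.+1 = y * 1.
    by rewrite -exprS mulr1 -{2}(expf_card y) card_Fp.
  by rewrite (mulfI (introN eqP hy) e) subrr.
under eq_bigr do rewrite F1.
case: (x =P 0) => [->|hx].
  by rewrite big1 // => i _; rewrite mxE eqxx.
have /rV0Pn [i hi] : x != 0 by apply/eqP.
by rewrite (bigD1 i) //= (negbTE hi) mul0r.
Qed.

Unset Implicit Arguments.

Theorem theorem3p1 (p d n : nat) (A : {set 'rV['F_p]_n}) :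
  prime p ->
  boolean_set A ->
  (#|A| > p * #|monos p n (d %/ p)|)%N ->
  (int_deg (sumset p A) > d)%N.
Proof.
case: p A => [|[|k]] A pr Hb HN; try by [].
set B := sumset k.+2 A.
rewrite ltnNge; apply/negP => hle.
rewrite /int_deg in hle.
case: (boolP (has (interp_deg B) (iota 0 (n * (k.+2 - 1)).+1))) => hhas.
  have := nth_find 0 hhas.
  have hf := hhas; rewrite has_find size_iota in hf.
  rewrite nth_iota ?add0n //.
  move=> /forallP /(_ [ffun x => (x == 0%R)%:R]) /existsP [c /forall_inP Hc].
  have := @key k n _ A pr Hb (ex_intro _ c (fun x hx => esym (etrans (esym (ffunE _ _)) (eqP (Hc x hx))))).
  move=> h2; have h1 := mono_monos k.+2 n hle.
  move: HN; rewrite ltnNge; apply/negP/negPn; apply: (leq_trans h2).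
  by rewrite leq_mul2l h1 orbT.
rewrite hasNfind // size_iota in hle.
have [c Hc] := explicit n pr.
have := @key k n _ A pr Hb (ex_intro _ c (fun x _ => Hc x)).
move=> h2; have h1 := @mono_monos k.+2 n (n * (k.+2 - 1)) d (ltnW hle).
move: HN; rewrite ltnNge; apply/negP/negPn; apply: (leq_trans h2).
by rewrite leq_mul2l h1 orbT.
Qed.
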